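(* Fix integers $2\le d\le n$ and $m\ge1$, and let $\lambda=\log n+m\log(1-d/n)$. Then \[ \mathbb{P}(H^*_{nmd}\text{ is disconnected})\ \le\ e^{\lambda}+\sum_{r=1}^\infty e^{(\lambda+5)r}+(2/e)^n. \]
   Context: $H^*_{nmd}$ is the random hypergraph on node set $\{1,\dots,n\}$ whose hyperedge set is $\{V_1,\dots,V_m\}$, with $V_1,\dots,V_m$ mutually independent uniformly random $d$-element subsets of $\{1,\dots,n\}$. A hypergraph on node set $V$ is connected if for every partition of $V$ into nonempty sets $V_1',V_2'$ some hyperedge meets both; otherwise disconnected. Conventions $\log0=-\infty$, $e^{-\infty}=0$; the series may equal $+\infty$. *)

(* Defs.v *)
From HB Require Import structures.
From mathcomp Require Import all_boot all_order all_algebra.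
From mathcomp Require Import all_classical all_reals all_analysis.
Set Implicit Arguments. Unset Strict Implicit. Unset Printing Implicit Defensive.
Import Order.TTheory GRing.Theory Num.Theory.

(* A hypergraph on node set 'I_n with m (labelled, possibly repeated)
   hyperedges, given as a finite function 'I_m -> {set 'I_n}. *)

Definition meets_both (n m : nat) (E : {ffun 'I_m -> {set 'I_n}})
  (V1 V2 : {set 'I_n}) : bool :=
  [exists i, (E i :&: V1 != finset.set0) && (E i :&: V2 != finset.set0)].

Definition hconnected (n m : nat) (E : {ffun 'I_m -> {set 'I_n}}) : bool :=
  [forall V1 : {set 'I_n},
     ((V1 != finset.set0) && (~: V1 != finset.set0)) ==> meets_both E V1 (~: V1)].

(* sample space of H*_{nmd}: m-tuples of d-element subsets of {1..n};
   the uniform distribution on it is the law of m mutually independent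
   uniformly random d-subsets. *)
Definition hsample (n m d : nat) : {set {ffun 'I_m -> {set 'I_n}}} :=
  [set E : {ffun 'I_m -> {set 'I_n}} | [forall i, #|E i| == d]].

Definition prob_disconnected (R : realType) (n m d : nat) : R :=
  (#|[set E in hsample n m d | ~~ hconnected E]|%:R
     / #|hsample n m d|%:R)%R.

(* lambda = log n + m log(1 - d/n), in the extended reals,
   with log 0 = -oo (lne) *)
Definition hlambda (R : realType) (n m d : nat) : \bar R :=
  (lne (n%:R : R)%:E + (m%:R : R)%:E * lne (1 - d%:R / n%:R : R)%:E)%E.

(* Main.v *)
Require Import Defs.
From HB Require Import structures.
From mathcomp Require Import all_boot all_order all_algebra.
From mathcomp Require Import all_classical all_reals all_analysis.
From mathcomp Require Import zify ring lra.
Import Order.TTheory GRing.Theory Num.Theory.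

Lemma ffact_le a b d : a <= b -> a ^_ d * b ^ d <= b ^_ d * a ^ d.
Proof.
move=> ab; elim: d => [|d IH]; first by rewrite !ffactn0 !expn0.
rewrite !ffactnSr !expnS.
have h : (a - d) * b <= (b - d) * a by nia.
nia.
Qed.

Lemma bin_le a b d : a <= b -> 'C(a, d) * b ^ d <= 'C(b, d) * a ^ d.
Proof.
move=> ab; rewrite -(@leq_pmul2r d`!) ?fact_gt0 //.
rewrite mulnAC bin_ffact [X in _ <= X]mulnAC bin_ffact; exact: ffact_le.
Qed.

Lemma ffactD n k d : n ^_ (k + d) = n ^_ k * (n - k) ^_ d.
Proof.
elim: d => [|d IH]; first by rewrite addn0 ffactn0 muln1.
by rewrite addnS !ffactnSr IH subnDA mulnA.
Qed.

Lemma bin_swap n k d : 'C(n, k) * 'C(n - k, d) = 'C(n, d) * 'C(n - d, k).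
Proof.
apply/eqP; rewrite -(@eqn_pmul2r (k`! * d`!)) ?muln_gt0 ?fact_gt0 //; apply/eqP.
have e1 : 'C(n, k) * 'C(n - k, d) * (k`! * d`!) = ('C(n, k) * k`!) * ('C(n - k, d) * d`!) by rewrite mulnACA.
have e2 : 'C(n, d) * 'C(n - d, k) * (k`! * d`!) = ('C(n, d) * d`!) * ('C(n - d, k) * k`!) by rewrite [k`! * _]mulnC mulnACA.
rewrite e1 e2.
rewrite !bin_ffact -!ffactD.
by rewrite addnC.
Qed.

Lemma alpha_le n k d : k <= n -> 'C(n - k, d) * n ^ k <= 'C(n, d) * (n - d) ^ k.
Proof.
move=> kn; rewrite -(@leq_pmul2l 'C(n, k)) ?bin_gt0 //.
have h1 := bin_swap n k d; have h2 := @bin_le _ _ k (leq_subr d n).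
have h3 := leq_mul (leqnn 'C(n, d)) h2.
rewrite mulnA h1; nia.
Qed.

Lemma leq_expr a b e : a <= b -> a ^ e <= b ^ e.
Proof. by move=> ab; elim: e => [|e IH]; rewrite ?expn0 // !expnS leq_mul. Qed.

Lemma beta_le n k d : 2 <= d -> 0 < k -> 2 * k <= n ->
  'C(k, d) * n ^ 2 <= 4 * k ^ 2 * 'C(n - k, d).
Proof.
move=> d2 k0 kn.
have kk : k <= n - k by lia.
have h1 := @bin_le _ _ d kk.
have nk0 : 0 < (n - k) ^ d by rewrite expn_gt0; apply/orP; left; lia.
rewrite -(@leq_pmul2r ((n - k) ^ d)) //.
move: h1 nk0; have [e ->] : exists e, d = e + 2 by exists (d - 2); lia.
rewrite !expnD => h1 nk0.
have h2 : k ^ e <= (n - k) ^ e by apply: leq_expr.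
have h3 : n ^ 2 <= 4 * (n - k) ^ 2 by rewrite !expnS !expn0; nia.
set A := 'C(k, e + 2); set B := 'C(n - k, e + 2).
set x := (n - k) ^ e; set y := (n - k) ^ 2; set z := k ^ e; set w := k ^ 2.
apply: (@leq_trans (B * (z * w) * n ^ 2)).
  by rewrite mulnAC leq_mul2r h1 orbT.
have -> : 4 * w * B * (x * y) = B * w * x * (4 * y) by ring.
have -> : B * (z * w) * n ^ 2 = B * w * z * n ^ 2 by ring.
by rewrite leq_mul // leq_mul.
Qed.

Lemma bin2_mul x : 'C(x, 2) * 2 = x * (x - 1).
Proof. by rewrite (bin_ffact x 2) ffactnSr ffactn1. Qed.

Lemma bin2_split n k : k <= n -> 'C(n - k, 2) + 'C(k, 2) + k * (n - k) = 'C(n, 2).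
Proof.
move=> kn; apply/eqP; rewrite -(@eqn_pmul2r 2) //; apply/eqP.
rewrite !mulnDl !bin2_mul; nia.
Qed.

Lemma bin_le_exp n k : 'C(n, k) <= n ^ k.
Proof.
have h : n ^_ k <= n ^ k.
  elim: k => [|k IH]; first by rewrite ffactn0 expn0.
  by rewrite ffactnSr expnSr leq_mul // leq_subr.
apply: leq_trans h; rewrite -bin_ffact; apply: leq_pmulr; exact: fact_gt0.
Qed.

Lemma d2_ineq n k : 2 <= k -> 2 * k <= n ->
  k * n * (n * (n - 1)) <= (n + 4 * k) * k * (n - k) * (n - 2).
Proof.
move=> k2 kn.
have [r ->] : exists r, n = 2 * k + r by exists (n - 2 * k); lia.
have -> : 2 * k + r - k = k + r by lia.
have -> : 2 * k + r - 1 = (2 * k - 1) + r by lia.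
have -> : 2 * k + r - 2 = (2 * k - 2) + r by lia.
have [j ->] : exists j, k = j + 2 by exists (k - 2); lia.
have -> : 2 * (j + 2) - 1 = 2 * j + 3 by lia.
have -> : 2 * (j + 2) - 2 = 2 * j + 2 by lia.
nia.
Qed.

Lemma card_hsample n m d : #|hsample n m d| = 'C(n, d) ^ m.
Proof.
rewrite (_ : #|hsample n m d| = #|ffun_on_mem 'I_m (mem [set A : {set 'I_n} | #|A| == d])|).
  by rewrite card_ffun_on card_draws !card_ord.
apply: eq_card => E; rewrite inE; apply/forallP/ffun_onP => h i.
  by rewrite inE h.
by have := h i; rewrite inE.
Qed.

Lemma card_ffset n m (S : {set {set 'I_n}}) :
  #|[set E : {ffun 'I_m -> {set 'I_n}} | [forall i, E i \in S]]| = #|S| ^ m.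
Proof.
rewrite (_ : #|[set E : {ffun 'I_m -> {set 'I_n}} | [forall i, E i \in S]]| = #|ffun_on_mem 'I_m (mem S)|).
  by rewrite card_ffun_on card_ord.
apply: eq_card => E; rewrite inE; apply/forallP/ffun_onP => h i; exact: h.
Qed.

Definition TV n m d (V : {set 'I_n}) : {set {ffun 'I_m -> {set 'I_n}}} :=
  [set E in hsample n m d | [forall i, (E i \subset V) || (E i \subset ~: V)]].

Lemma card_TV n m d V : (0 < d)%N ->
  #|TV n m d V| <= ('C(#|V|, d) + 'C(n - #|V|, d)) ^ m.
Proof.
move=> d0.
set G1 := [set A : {set 'I_n} | A \subset V & #|A| == d].
set G2 := [set A : {set 'I_n} | A \subset ~: V & #|A| == d].
apply: (@leq_trans #|[set E : {ffun 'I_m -> {set 'I_n}} | [forall i, E i \in G1 :|: G2]]|).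
  apply: subset_leq_card; apply/fintype.subsetP => E; rewrite !inE => /andP[hE hV].
  apply/forallP => i; move/forallP: hE => /(_ i) /eqP hEi.
  by move/forallP: hV => /(_ i) /orP[h|h]; rewrite !inE h hEi eqxx //= orbT.
rewrite card_ffset leq_expr //.
apply: leq_trans (leq_card_setU _ _) _.
have hc : #|~: V| = n - #|V| by rewrite cardsCs finset.setCK card_ord.
by rewrite /G1 /G2 !cards_draws hc.
Qed.

Lemma card_bad n m d :
  #|[set E in hsample n m d | ~~ hconnected E]|
    <= \sum_(V : {set 'I_n} | (0 < #|V| < n)%N) #|TV n m d V|.
Proof.
rewrite -sum1_card.
apply: (@leq_trans (\sum_(E in [set E in hsample n m d | ~~ hconnected E])
           \sum_(V : {set 'I_n} | (0 < #|V| < n)%N) ((E \in TV n m d V) : nat))).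
  apply: leq_sum => E; rewrite inE => /andP[EH nc].
  move: nc; rewrite /hconnected negb_forall => /existsP[V1].
  rewrite negb_imply => /andP[/andP[ne1 ne2] nm].
  have c1 : (0 < #|V1|)%N by rewrite card_gt0.
  have c2 : (0 < #|~: V1|)%N by rewrite card_gt0.
  have c3 := cardsC V1; rewrite card_ord in c3.
  rewrite (bigD1 V1) /=; last by rewrite c1 /=; apply: (leq_trans _ (eq_leq c3)); rewrite -{1}(addn0 #|V1|) ltn_add2l.
  suff -> : E \in TV n m d V1 by [].
  rewrite inE EH /=; apply/forallP => i.
  move/existsPn: nm => /(_ i); rewrite negb_and !negbK => /orP[h|h].
    by rewrite finset.setI_eq0 finset.disjoints_subset in h; rewrite h orbT.
  by rewrite finset.setI_eq0 finset.disjoints_subset finset.setCK in h; rewrite h.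
rewrite exchange_big /=; apply: leq_sum => V _.
rewrite -sum1_card [X in (_ <= X)%N]big_mkcond big_mkcond /=.
rewrite [X in (X <= _)%N]big_mkcond /=. by apply: leq_sum => E _; case: (E \in _); case: (E \in TV n m d V).
Qed.

Lemma group_sum (R : realType) n (P : pred nat) (F : nat -> R) :
  (\sum_(V : {set 'I_n} | P #|V|) F #|V| = \sum_(s < n.+1 | P s) 'C(n, s)%:R * F s)%R.
Proof.
have cV : forall V : {set 'I_n}, (#|V| < n.+1)%N.
  by move=> V; rewrite ltnS; apply: leq_trans (max_card _) _; rewrite card_ord.
rewrite (partition_big (fun V : {set 'I_n} => (inord #|V| : 'I_n.+1)) (fun s : 'I_n.+1 => P s)).
  apply: eq_bigr => s Ps.
  rewrite (eq_bigl (fun V => V \in [set V : {set 'I_n} | #|V| == s])); last first.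
    move=> V; rewrite inE -val_eqE /= inordK //.
    by case: eqP => [->|_]; rewrite ?Ps ?andbF.
  rewrite (eq_bigr (fun _ => F s)); last by move=> V; rewrite inE => /eqP ->.
  by rewrite sumr_const card_draws card_ord mulr_natl.
by move=> V PV; rewrite inordK.
Qed.

Local Open Scope ring_scope.

Lemma powle (R : realType) (x y : R) N : (0 < N)%N -> 0 <= x -> 0 <= y ->
  x ^+ N <= y ^+ N -> x <= y.
Proof. by move=> N0 x0 y0; rewrite ler_pXn2r. Qed.

Lemma dich (R : realType) (n k : nat) (P w : R) : (0 < k)%N -> 0 <= P -> 0 <= w ->
  P ^+ (n + 4 * k) <= w ^+ n ->
  P <= expR (- n%:R) \/ P <= w * expR (4 * k)%:R.
Proof.
move=> k0 P0 w0 h.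
have N0 : (0 < n + 4 * k)%N by lia.
have [wle|wgt] := lerP w (expR (- (n + 4 * k)%:R)).
  left; apply: (@powle _ _ _ _ N0 P0 (expR_ge0 _)).
  apply: (le_trans h).
  apply: (le_trans (lerXn2r _ _ _ wle)) => //; try by rewrite qualifE /= ?expR_ge0.
  by rewrite -!expRM_natl ler_expR !mulrN [n%:R * _]mulrC.
right; apply: (@powle _ _ _ _ N0 P0); first by rewrite mulr_ge0 ?expR_ge0.
apply: (le_trans h).
have e1 : expR (4 * k)%:R ^+ (n + 4 * k) = expR (n + 4 * k)%:R ^+ (4 * k) :> R.
  by rewrite -!expRM_natl mulrC.
rewrite exprMn exprD e1 -mulrA -exprMn ler_peMr ?exprn_ge0 //.
apply: exprn_ege1.
move: wgt; rewrite expRN => wgt.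
rewrite -(@ler_pdivrMr _ (expR (n + 4 * k)%:R)) ?expR_gt0 //.
by rewrite mul1r ltW.
Qed.

Lemma perk (R : realType) (n k : nat) (P u : R) : (0 < k)%N -> 0 <= P -> 0 <= u ->
  P ^+ (n + 4 * k) <= (u ^+ k) ^+ n ->
  'C(n, k)%:R * P <= (expR 5 * n%:R * u) ^+ k / 2 + 'C(n, k)%:R * expR (- n%:R).
Proof.
move=> k0 P0 u0 h.
have C0 : 0 <= 'C(n, k)%:R :> R by [].
have A0 : 0 <= (expR 5 * n%:R * u) ^+ k / 2 :> R.
  by rewrite divr_ge0 // exprn_ge0 // mulr_ge0 // mulr_ge0 // expR_ge0.
case: (@dich _ _ _ _ _ k0 P0 (exprn_ge0 k u0) h) => hP.
  rewrite -[X in X <= _]add0r lerD //; exact: ler_wpM2l.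
rewrite -[X in X <= _]addr0; apply: lerD; last by rewrite mulr_ge0 ?expR_ge0.
apply: (le_trans (ler_wpM2l C0 hP)).
have Cn : 'C(n, k)%:R <= n%:R ^+ k :> R by rewrite -natrX ler_nat bin_le_exp.
apply: (le_trans (ler_wpM2r _ Cn)); first by rewrite mulr_ge0 ?exprn_ge0 ?expR_ge0.
rewrite !exprMn ler_pdivlMr // -expRM_natl.
have e : expR (k%:R * 5) = expR (4 * k)%:R * expR k%:R :> R.
  by rewrite -expRD natrM; congr expR; ring.
rewrite e.
have e2 : 2 <= expR k%:R :> R.
  apply: le_trans (expR_ge1Dx _); have : (1 : R) <= k%:R by rewrite ler1n.
  lra.
have X0 : 0 <= n%:R ^+ k * u ^+ k * expR (4 * k)%:R :> R.
  by rewrite !mulr_ge0 ?exprn_ge0 ?expR_ge0.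
have := ler_wpM2l X0 e2.
move=> H; rewrite mulrA; apply: (le_trans H); rewrite le_eqVlt; apply/orP; left; apply/eqP; ring.
Qed.

Lemma lerXn2 (R : realType) (x y : R) N : 0 <= x -> x <= y -> x ^+ N <= y ^+ N.
Proof. by move=> x0 xy; apply: lerXn2r; rewrite ?qualifE //= (le_trans x0 xy). Qed.

Lemma claim (R : realType) (n d k : nat) : (2 <= d)%N -> (d <= n)%N -> (0 < k)%N ->
  (2 * k <= n)%N ->
  (('C(k, d) + 'C(n - k, d))%:R / 'C(n, d)%:R : R) ^+ (n + 4 * k)
    <= ((n - d)%:R / n%:R : R) ^+ (k * n).
Proof.
move=> d2 dn k0 kn.
have n0 : (0 < n)%N by lia.
have nR0 : 0 < n%:R :> R by rewrite ltr0n.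
have c0 : 0 < 'C(n, d)%:R :> R by rewrite ltr0n bin_gt0.
set c := 'C(n, d)%:R : R.
set q := (n - d)%:R / n%:R : R.
have q0 : 0 <= q by rewrite divr_ge0.
have q1 : q <= 1 by rewrite ler_pdivrMr // mul1r ler_nat leq_subr.
have alpha : 'C(n - k, d)%:R / c <= q ^+ k.
  rewrite /q expr_div_n ler_pdivrMr // mulrAC ler_pdivlMr ?exprn_gt0 //.
  rewrite -!natrX -!natrM ler_nat [X in (_ <= X)%N]mulnC; apply: alpha_le; lia.
have a0 : 0 <= 'C(n - k, d)%:R / c by rewrite divr_ge0 // ltW.
have qexp : q ^+ (k * (n + 4 * k)) <= q ^+ (k * n).
  by apply: ler_wiXn2l => //; rewrite leq_mul2l leq_addr orbT.
have [kd|dk] := ltnP k d.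
  rewrite (bin_small kd) add0n.
  apply: le_trans qexp; rewrite exprM; exact: lerXn2.
have N0 : (0 < n + 4 * k)%N by lia.
have [d3|d2e] : (3 <= d)%N \/ d = 2%N by lia.
  set y := 4 * k%:R ^+ 2 / n%:R ^+ 2 : R.
  have y0 : 0 <= y by rewrite /y divr_ge0 // mulr_ge0 // exprn_ge0.
  have beta : 'C(k, d)%:R <= y * 'C(n - k, d)%:R :> R.
    have := @beta_le n k d d2 k0 kn; rewrite -(ler_nat R) => h.
    rewrite !natrM -!expr2 in h.
    by rewrite /y mulrAC ler_pdivlMr ?exprn_gt0 //.
  have pb : ('C(k, d) + 'C(n - k, d))%:R / c <= expR y * q ^+ k.
    apply: (@le_trans _ _ ((1 + y) * ('C(n - k, d)%:R / c))).
      rewrite natrD mulrDl mulrDl mul1r addrC lerD2l mulrA.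
      by apply: ler_wpM2r => //; rewrite invr_ge0 ltW.
    apply: (le_trans (ler_wpM2l _ alpha)); first by rewrite addr_ge0.
    apply: ler_wpM2r; first exact: exprn_ge0.
    by rewrite expR_ge1Dx.
  have p0 : 0 <= ('C(k, d) + 'C(n - k, d))%:R / c :> R by rewrite divr_ge0 // ltW.
  apply: (le_trans (@lerXn2 _ _ _ (n + 4 * k) p0 pb)).
  rewrite exprMn -exprM mulnDr (exprD q).
  rewrite mulrCA -[X in _ <= X]mulr1 ler_wpM2l ?exprn_ge0 //.
  have qe : q <= expR (- (d%:R / n%:R)).
    apply: le_trans (expR_ge1Dx _).
    by rewrite /q natrB // mulrBl divff ?gt_eqF.
  apply: (@le_trans _ _ (expR (- (d%:R / n%:R)) ^+ (k * (4 * k)) * expR y ^+ (n + 4 * k))).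
    by rewrite mulrC; apply: ler_wpM2r; rewrite ?exprn_ge0 ?expR_ge0 //; apply: lerXn2.
  rewrite -!expRM_natl -expRD expR_le1.
  have Nd : (n + 4 * k)%:R <= d%:R * n%:R :> R by rewrite -natrM ler_nat; nia.
  have -> : (k * (4 * k))%:R * - (d%:R / n%:R) + (n + 4 * k)%:R * y
      = y * ((n + 4 * k)%:R - d%:R * n%:R) :> R.
    rewrite /y natrM natrM natrD; field; by rewrite gt_eqF.
  by rewrite mulr_ge0_le0 // subr_le0.
subst d.
have n4 : (4 <= n)%N by lia.
set K := (k * (n - k))%:R : R.
set z := K / c.
have kn' : (k <= n)%N by lia.
have sp := @bin2_split n k kn'.
have pe : ('C(k, 2) + 'C(n - k, 2))%:R / c = 1 - z.
  rewrite /z /K /c -sp !natrD; field.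
  by rewrite -natrM -!natrD pnatr_eq0 sp -lt0n bin_gt0; lia.
have z0 : 0 <= 1 - z by rewrite -pe divr_ge0 // ltW.
rewrite pe.
apply: (le_trans (@lerXn2 _ _ _ (n + 4 * k) z0 (expR_ge1Dx (- z)))).
set x := 2 / (n - 2)%:R : R.
have n2 : 0 < (n - 2)%:R :> R by rewrite ltr0n; lia.
have qlow : expR (- x) <= q.
  rewrite expRN /q -[X in _ <= X]invf_div lef_pV2 ?qualifE /= ?expR_gt0 ?divr_gt0 //.
  apply: le_trans (expR_ge1Dx _).
  rewrite /x natrB //.
  rewrite le_eqVlt; apply/orP; left; apply/eqP; field.
  by rewrite -(natrB _ (_ : (2 <= n)%N)) ?pnatr_eq0; lia.
apply: (le_trans _ (@lerXn2 _ _ _ (k * n) (expR_ge0 _) qlow)).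
rewrite -!expRM_natl ler_expR !mulrN lerN2.
have c2 : c * 2 = (n * (n - 1))%:R by rewrite /c -bin2_mul natrM.
rewrite /x /z /K mulrA ler_pdivrMr // mulrAC mulrA ler_pdivlMr //.
have -> : (k * n)%:R * 2 * c = (k * n)%:R * (c * 2) :> R by ring.
rewrite c2 -!natrM ler_nat.
have := @d2_ineq n k dk kn; lia.
Qed.

Definition pp (R : realType) n d s : R := ('C(s, d) + 'C(n - s, d))%:R / 'C(n, d)%:R.
Definition ff (R : realType) n m d r : R :=
  (expR 5 * n%:R * ((n - d)%:R / n%:R) ^+ m) ^+ r.

Lemma ff_ge0 (R : realType) n m d r : (d <= n)%N -> 0 <= ff R n m d r.
Proof. by move=> dn; rewrite /ff exprn_ge0 // !mulr_ge0 ?expR_ge0 ?exprn_ge0 ?divr_ge0. Qed.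

Lemma perk2 (R : realType) n m d k : (2 <= d)%N -> (d <= n)%N -> (0 < k)%N ->
  (2 * k <= n)%N ->
  'C(n, k)%:R * pp R n d k ^+ m <= ff R n m d k / 2 + 'C(n, k)%:R * expR (- n%:R).
Proof.
move=> d2 dn k0 kn.
have n0 : (0 < n)%N by lia.
have q0 : 0 <= (n - d)%:R / n%:R :> R by rewrite divr_ge0.
apply: (@perk R n k (pp R n d k ^+ m) (((n - d)%:R / n%:R) ^+ m) k0).
- by rewrite exprn_ge0 // divr_ge0.
- exact: exprn_ge0.
rewrite -!exprM mulnC exprM [X in _ <= X](_ : _ = ((n - d)%:R / n%:R) ^+ (k * n) ^+ m).
  apply: lerXn2; first by rewrite exprn_ge0 // divr_ge0.
  exact: claim.
by rewrite -!exprM; congr (_ ^+ _); lia.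
Qed.

Lemma pers (R : realType) n m d s : (2 <= d)%N -> (d <= n)%N -> (0 < s < n)%N ->
  'C(n, s)%:R * pp R n d s ^+ m
    <= ff R n m d s / 2 + ff R n m d (n - s) / 2 + 'C(n, s)%:R * expR (- n%:R).
Proof.
move=> d2 dn /andP[s0 sn].
have [sh|sh] := leqP (2 * s) n.
  apply: (le_trans (@perk2 R n m d s d2 dn s0 sh)).
  by rewrite lerD2r lerDl divr_ge0 ?ff_ge0.
have e1 : pp R n d s = pp R n d (n - s) by rewrite /pp subKn ?(ltnW sn) // addnC.
have e2 : 'C(n, s) = 'C(n, n - s) by rewrite bin_sub // ltnW.
rewrite e1 e2.
have ns0 : (0 < n - s)%N by lia.
have ns2 : (2 * (n - s) <= n)%N by lia.
apply: (le_trans (@perk2 R n m d (n - s) d2 dn ns0 ns2)).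
by rewrite lerD2r lerDr divr_ge0 ?ff_ge0.
Qed.

Lemma term_eq (R : realType) n m d r : (2 <= d)%N -> (d <= n)%N -> (1 <= m)%N -> (1 <= r)%N ->
  (expeR ((hlambda R n m d + 5%:E) * (r%:R : R)%:E) = (ff R n m d r)%:E)%E.
Proof.
move=> d2 dn m1 r1.
have n0 : 0 < n%:R :> R by rewrite ltr0n; lia.
have qe : 1 - d%:R / n%:R = (n - d)%:R / n%:R :> R.
  by rewrite natrB // mulrBl divff ?gt_eqF.
rewrite /hlambda qe /ff.
have [dlt|deq] := ltnP d n.
  have q0 : 0 < (n - d)%:R / n%:R :> R by rewrite divr_gt0 // ltr0n subn_gt0.
  rewrite !lne_EFin //= expRM_natr !expRD lnK ?qualifE // expRM_natl lnK ?qualifE //.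
  by congr (_ %:E); congr (_ ^+ _); ring.
have -> : n = d by lia.
rewrite subnn mul0r (le0_lneNy (lexx _)) gt0_muleNy ?lte_fin ?ltr0n // addeNy addNye.
rewrite gt0_mulNye ?lte_fin ?ltr0n //= expr0n /=; case: m m1 => // m _.
by rewrite mulr0 expr0n; case: r r1.
Qed.

Lemma prob_bound (R : realType) n m d : (2 <= d)%N -> (d <= n)%N ->
  prob_disconnected R n m d <=
    \sum_(s < n.+1 | (0 < s < n)%N) 'C(n, s)%:R * pp R n d s ^+ m.
Proof.
move=> d2 dn.
have cd0 : (0 < 'C(n, d))%N by rewrite bin_gt0.
have c0 : (0 < 'C(n, d) ^ m)%N by rewrite expn_gt0 cd0.
rewrite /prob_disconnected card_hsample ler_pdivrMr ?ltr0n //.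
have h1 : (#|[set E in hsample n m d | ~~ hconnected E]|%:R : R) <=
    \sum_(V : {set 'I_n} | (0 < #|V| < n)%N) (('C(#|V|, d) + 'C(n - #|V|, d)) ^ m)%:R.
  rewrite -natr_sum ler_nat; apply: leq_trans (card_bad n m d) _.
  by apply: leq_sum => V _; apply: card_TV; lia.
apply: (le_trans h1).
rewrite -(group_sum R n (fun s => (0 < s < n)%N) (fun s => pp R n d s ^+ m)) mulr_suml.
apply: ler_sum => V _; rewrite /pp expr_div_n !natrX divfK //.
by rewrite expf_neq0 // pnatr_eq0 -lt0n.
Qed.

Lemma refl_sum (R : realType) n (g : nat -> R) :
  \sum_(s < n.+1 | (0 < s < n)%N) g (n - s)%N = \sum_(s < n.+1 | (0 < s < n)%N) g s.
Proof.
rewrite (reindex_inj rev_ord_inj) /=.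
apply: eq_big => s.
  have := ltn_ord s; rewrite subSS => hs.
  by apply/idP/idP => /andP[h1 h2]; apply/andP; split; lia.
by move=> _; rewrite subSS subKn // -ltnS.
Qed.

Lemma sum_bin (R : realType) n : \sum_(s < n.+1) 'C(n, s)%:R = 2 ^+ n :> R.
Proof.
have -> : (2 : R) = 1 + 1 by [].
by rewrite exprDn; apply: eq_bigr => i _; rewrite !expr1n mul1r.
Qed.

Lemma drop_filter (R : realType) n (P : pred nat) (F : nat -> R) :
  (forall s, 0 <= F s) -> \sum_(s < n | P s) F s <= \sum_(s < n) F s.
Proof.
move=> F0; rewrite big_mkcond /=; apply: ler_sum => s _.
by case: (P s).
Qed.

Lemma expRn_inv (R : realType) n : (2 / expR (1 : R)) ^+ n = 2 ^+ n * expR (- n%:R).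
Proof. by rewrite expr_div_n expRN -expRM_natl mulr1. Qed.

Lemma real_bound (R : realType) n m d : (2 <= d)%N -> (d <= n)%N ->
  prob_disconnected R n m d <=
    \sum_(1 <= s < n.+1) ff R n m d s + (2 / expR (1 : R)) ^+ n.
Proof.
move=> d2 dn.
apply: (le_trans (@prob_bound R n m d d2 dn)).
apply: (@le_trans _ _ (\sum_(s < n.+1 | (0 < s < n)%N)
   (ff R n m d s / 2 + ff R n m d (n - s) / 2 + 'C(n, s)%:R * expR (- n%:R)))).
  by apply: ler_sum => s Ps; apply: pers.
rewrite !big_split /= -!mulr_suml (@refl_sum R n (ff R n m d)).
have h2 : forall x : R, x / 2 + x / 2 = x by move=> x; field.
rewrite h2 lerD //.
  rewrite big_mkcond /= big_ord_recl /= add0r big_add1 /= big_mkord.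
  apply: ler_sum => i _; rewrite /bump leq0n add1n; case: ifP => _ //; exact: ff_ge0.
rewrite expRn_inv -sum_bin; apply: ler_wpM2r; first exact: expR_ge0.
by apply: (@drop_filter R n.+1 (fun i => (0 < i < n)%N) (fun s => 'C(n, s)%:R)) => s; exact: ler0n.
Qed.


Local Close Scope ring_scope.

Theorem mainTheorem13 (R : realType) (n m d : nat)
  (h2d : (2 <= d)%N) (hdn : (d <= n)%N) (hm : (1 <= m)%N) :
  ((prob_disconnected R n m d)%:E <=
     expeR (hlambda R n m d)
     + (\sum_(1 <= r <oo) expeR ((hlambda R n m d + 5%:E) * (r%:R : R)%:E))
     + ((2 / expR (1 : R)) ^+ n)%:E)%E.
Proof.
have hr := @real_bound R n m d h2d hdn.
set S := (\sum_(1 <= s < n.+1) ff R n m d s)%R.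
have hS : (S%:E <= \sum_(1 <= r <oo) expeR ((hlambda R n m d + 5%:E) * (r%:R : R)%:E))%E.
  apply: le_trans (@nneseries_lim_ge R (fun r => expeR ((hlambda R n m d + 5%:E) * (r%:R : R)%:E)) xpredT 1 n.+1 _).
    rewrite /S -sumEFin le_eqVlt; apply/orP; left; apply/eqP.
    by apply: eq_big_nat => i /andP[i1 _]; rewrite term_eq.
  by move=> k _ _; exact: expeR_ge0.
apply: (@le_trans _ _ ((S + (2 / expR 1) ^+ n)%R%:E)); first by rewrite lee_fin.
rewrite EFinD; apply: leeD => //; rewrite -[S%:E]add0e; apply: leeD => //.
exact: expeR_ge0.
Qed.
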